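(* Let $G$ be an edge-colored graph. The following are equivalent: (1) $G$ is PC acyclic of type 5; (2) the orientation procedure described below completes without a conflict and the resulting digraph is acyclic; (3) every vertex of $G$ is incident to edges of at most two colors, and every cycle $C$ in $G$ has a positive even number of $C$-monochromatic vertices.
   Context: An edge-colored graph is a finite undirected graph in which every edge is assigned a color. An ordering $v_1,\dots,v_n$ of $V(G)$ is of type 5 if for every $i\in[n]$, all edges from $v_i$ to $\{v_{i+1},\dots,v_n\}$ have the same color, all edges from $v_i$ to $\{v_1,\dots,v_{i-1}\}$ have the same color, and these two colors are different. $G$ is PC acyclic of type 5 if it has an ordering of its vertices of type 5. For a cycle $C$ in $G$, a vertex of $C$ is $C$-monochromatic if its two incident edges on $C$ have the same color. The orientation procedure: first check that each vertex is incident to edges of at most two colors (otherwise the procedure fails). Choose an arbitrary vertex $x$ (in each connected component) and orient the edges of one color incident to $x$ out of $x$ and the edges of the other color towards $x$. Then repeatedly, for every unmarked vertex $y$ that has an arc into it (respectively out of it) coming from an edge of color $i$, mark $y$ and orient all edges of color $i$ incident to $y$ towards $y$ (respectively out of $y$) and all other edges incident to $y$ out of $y$ (respectively towards $y$). The procedure stops with a conflict if orienting the edges incident to some $y$ causes some other vertex $z$ to (a) have two arcs of different colors oriented into it or two arcs of different colors oriented out of it, or (b) have an arc into it and an arc out of it of the same color. It completes if all edges are oriented without such a conflict. *)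

(* Defs.v *)
From mathcomp Require Import all_boot.
Set Implicit Arguments. Unset Strict Implicit. Unset Printing Implicit Defensive.

Section EdgeColored.
(* An edge-colored graph: vertex set T (finite), simple undirected adjacency
   relation adj (assumed symmetric and irreflexive in the theorem), and a
   coloring col of the edges (col u v is the color of the edge uv; assumed
   symmetric on edges in the theorem). *)
Variables (T : finType) (K : eqType) (adj : rel T) (col : T -> T -> K).

(* An ordering v_1,...,v_n of V(G) is a duplicate-free sequence containing
   every vertex; the position of v is index v s. *)
Definition type5_ordering (s : seq T) : Prop :=
  [/\ uniq s, (forall v, v \in s) &
      forall v u w, adj v u -> adj v w ->
        [/\ (index v s < index u s -> index v s < index w s -> col v u = col v w),
            (index u s < index v s -> index w s < index v s -> col v u = col v w) &
            (index u s < index v s -> index v s < index w s -> col v u <> col v w)]].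

Definition PC_acyclic_type5 : Prop := exists s, type5_ordering s.

Definition at_most_two_colors : Prop :=
  forall x u v w, adj x u -> adj x v -> adj x w ->
    [\/ col x u = col x v, col x u = col x w | col x v = col x w].

(* A state of the procedure: the set of marked vertices and the current
   (partial) orientation, arc u v meaning the edge uv is oriented u -> v. *)
Record pstate := PState { marked : {set T}; arc : rel T }.

Definition init_state : pstate := PState set0 (fun _ _ => false).

(* Orient all edges incident to y: edges of color i out of y if out = true
   (towards y if out = false), all other edges incident to y the other way. *)
Definition orient_at (a : rel T) (y : T) (i : K) (out : bool) : rel T :=
  fun u v =>
    if u == y then adj y v && ((col y v == i) == out)
    else if v == y then adj y u && ((col y u == i) == ~~ out)
    else a u v.

Definition conflict (a : rel T) : Prop :=
  exists z u w,
    [\/ a u z /\ a w z /\ col u z <> col w z,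
        a z u /\ a z w /\ col z u <> col z w
      | a u z /\ a z w /\ col u z = col z w].

Inductive pstep : pstate -> pstate -> Prop :=
| pstep_start (s : pstate) (x : T) (i : K) (out : bool) :
    x \notin marked s ->
    (forall m, m \in marked s -> ~~ connect adj x m) ->
    ((exists z, adj x z /\ col x z = i) \/ (forall z, ~~ adj x z)) ->
    pstep s (PState (x |: marked s) (orient_at (arc s) x i out))
| pstep_in (s : pstate) (y w : T) :
    y \notin marked s -> arc s w y ->
    pstep s (PState (y |: marked s) (orient_at (arc s) y (col w y) false))
| pstep_out (s : pstate) (y w : T) :
    y \notin marked s -> arc s y w ->
    pstep s (PState (y |: marked s) (orient_at (arc s) y (col y w) true)).

(* States reachable by a run of the procedure; the procedure stops as soon as
   a conflict occurs, so steps are only taken from conflict-free states. *)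
Inductive reachable : pstate -> Prop :=
| reach_init : reachable init_state
| reach_step (s s' : pstate) :
    reachable s -> ~ conflict (arc s) -> pstep s s' -> reachable s'.

Definition terminal (s : pstate) : Prop := forall s', ~ pstep s s'.

Definition acyclic_digraph (a : rel T) : Prop :=
  forall u v, a u v -> ~~ connect a v u.

(* The orientation procedure completes without conflict (whatever the
   arbitrary choices made) and the resulting digraph is acyclic. *)
Definition procedure_succeeds_acyclic : Prop :=
  [/\ at_most_two_colors,
      (forall s, reachable s -> ~ conflict (arc s)) &
      (forall s, reachable s -> terminal s ->
         (forall u v, adj u v -> arc s u v || arc s v u) /\ acyclic_digraph (arc s))].

Definition is_graph_cycle (p : seq T) : bool :=
  [&& cycle adj p, uniq p & 2 < size p].

Definition mono_count (p : seq T) : nat :=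
  count (fun v => col (prev p v) v == col v (next p v)) p.

Definition cycle_condition : Prop :=
  at_most_two_colors /\
  forall p, is_graph_cycle p -> 0 < mono_count p /\ ~~ odd (mono_count p).

End EdgeColored.

(* Main.v *)
Require Import Defs.
From mathcomp Require Import all_boot zify.
From Stdlib Require Import Lia Classical.
Set Implicit Arguments. Unset Strict Implicit. Unset Printing Implicit Defensive.

Section Gen.
Variable T : eqType.

Fixpoint epath (h : T -> T -> nat) (x : T) (p : seq T) : nat :=
  if p is y :: p' then h x y + epath h y p' else 0.

Lemma eq_epath h1 h2 x p : h1 =2 h2 -> epath h1 x p = epath h2 x p.
Proof. by move=> H; elim: p x => //= y p IH x; rewrite H IH. Qed.

Lemma epath_cat h x p q : epath h x (p ++ q) = epath h x p + epath h (last x p) q.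
Proof. by elim: p x => //= y p IH x; rewrite IH addnA. Qed.

Lemma epath_rcons h x p y : epath h x (rcons p y) = epath h x p + h (last x p) y.
Proof. by rewrite -cats1 epath_cat /= addn0. Qed.

Lemma epathD h1 h2 x p :
  epath (fun a b => h1 a b + h2 a b) x p = epath h1 x p + epath h2 x p.
Proof. elim: p x => //= y p IH x; rewrite IH; lia. Qed.

Lemma epath1 x p : epath (fun _ _ => 1) x p = size p.
Proof. by elim: p x => //= y p IH x; rewrite IH. Qed.

Lemma epath_odd h x p : (forall a b, odd (h a b)) -> odd (epath h x p) = odd (size p).
Proof. move=> H; elim: p x => //= y p IH x; rewrite oddD IH H. by []. Qed.

Lemma epath_eq_path (e : rel T) h1 h2 x p : path e x p ->
  (forall a b, e a b -> h1 a b = h2 a b) -> epath h1 x p = epath h2 x p.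
Proof. move=> + H; elim: p x => //= y p IH x /andP[exy pp]; by rewrite H // IH. Qed.

Lemma sum_next_at (F : T -> T -> nat) y0 x q : uniq (x :: q) ->
  \sum_(v <- x :: q) F v (next_at v y0 x q) = epath F x (rcons q y0).
Proof.
elim: q x => [|y q IH] x /=.
  by rewrite big_cons big_nil eqxx addn0.
case/andP=> xn /andP[yn uq]; rewrite big_cons eqxx; congr (_ + _).
rewrite -(IH y) /= ?yn //; apply: eq_big_seq => v vin.
have -> : (v == x) = false by apply/eqP=> vx; rewrite -vx vin in xn.
by [].
Qed.

Lemma sum_next (F : T -> T -> nat) x q : uniq (x :: q) ->
  \sum_(v <- x :: q) F v (next (x :: q) v) = epath F x (rcons q x).
Proof. exact: sum_next_at. Qed.

Lemma sum_prev (F : T -> T -> nat) x q : uniq (x :: q) ->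
  \sum_(v <- x :: q) F (prev (x :: q) v) v = epath F x (rcons q x).
Proof.
move=> U.
have pe : perm_eq (x :: q) (map (next (x :: q)) (x :: q)).
  apply: uniq_perm => //; first by rewrite map_inj_in_uniq // => a b _ _ /(can_inj (prev_next U)).
  by move=> v; apply/idP/mapP => [vin|[u uin ->]]; [exists (prev (x::q) v); rewrite ?mem_prev ?next_prev | rewrite mem_next].
rewrite (perm_big _ pe) big_map -sum_next //; apply: eq_bigr => v _; by rewrite prev_next.
Qed.

Lemma count_sum (P : pred T) s : count P s = \sum_(v <- s) (P v : nat).
Proof. by elim: s => [|y s IH]; rewrite ?big_nil ?big_cons //= IH. Qed.

Lemma sum_odd (f : T -> nat) s : (forall v, odd (f v)) -> odd (\sum_(v <- s) f v) = odd (size s).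
Proof. move=> H; elim: s => [|y s IH]; rewrite ?big_nil ?big_cons //= oddD IH H. by []. Qed.

Lemma nonuniq_split (s : seq T) : ~~ uniq s -> exists a y b d, s = a ++ y :: b ++ y :: d.
Proof.
elim: s => //= z s IH; rewrite negb_and negbK => /orP[zin|/IH [a [y [b [d ->]]]]].
  by case/splitPr: zin => b d; exists [::], z, b, d.
by exists (z :: a), y, b, d.
Qed.


Lemma last_rev_belast (x : T) p : last (last x p) (rev (belast x p)) = x.
Proof. by rewrite -(last_cons x) -rev_rcons -lastI rev_cons last_rcons. Qed.

Lemma epath_rev h (x : T) p :
  epath h (last x p) (rev (belast x p)) = epath (fun a b => h b a) x p.
Proof.
elim: p x => //= y p IHp x; rewrite rev_cons epath_rcons IHp last_rev_belast.
by rewrite addnC.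
Qed.

Lemma closed_walk_ind (e : rel T) (Pr : T -> seq T -> Prop) :
  (forall x q, uniq (x :: q) -> path e x (rcons q x) -> Pr x q) ->
  (forall x a b, Pr x a -> Pr x b -> Pr x (a ++ x :: b)) ->
  (forall x a y b d, Pr y b -> Pr x (a ++ y :: d) -> Pr x (a ++ y :: b ++ y :: d)) ->
  forall x q, path e x (rcons q x) -> Pr x q.
Proof.
move=> Hb H1 H2 x q.
have [n] := ubnP (size q); elim: n x q => // n IH x q sq pq.
case: (boolP (uniq (x :: q))) => U; first exact: Hb.
move: U; rewrite /= negb_and negbK => /orP[xin|/nonuniq_split [a [y [b [d E]]]]].
  case/splitPr: xin sq pq => a b sq.
  rewrite rcons_cat /= cat_path /= => /and3P[pa ex pb].
  apply: H1; apply: IH.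
  - by move: sq; rewrite size_cat /=; lia.
  - by rewrite rcons_path pa.
  - by move: sq; rewrite size_cat /=; lia.
  - by [].
move: sq pq; rewrite E => sq.
rewrite rcons_cat /= cat_path /= rcons_cat /= cat_path /= => /and3P[pa ea /andP[pb /andP[eb pd]]].
apply: H2; apply: IH.
- by move: sq; rewrite !size_cat /= ?size_cat /=; lia.
- by rewrite rcons_path pb.
- by move: sq; rewrite !size_cat /= ?size_cat /=; lia.
- by rewrite rcons_cat /= cat_path /= pa ea.
Qed.

End Gen.

Section Main.
Variables (T : finType) (K : eqType) (adj : rel T) (col : T -> T -> K).
Hypothesis adj_sym : symmetric adj.
Hypothesis adj_irr : irreflexive adj.
Hypothesis col_sym : forall u v, adj u v -> col u v = col v u.

Lemma adj_neq u v : adj u v -> u != v.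
Proof. by move=> h; apply/eqP=> e; rewrite e adj_irr in h. Qed.

Section Topo.
Variable a : rel T.
Hypothesis a_adj : forall u v, a u v -> adj u v.
Hypothesis a_tot : forall u v, adj u v -> a u v || a v u.
Hypothesis a_acy : acyclic_digraph a.
Hypothesis a_nc : ~ conflict col a.

Definition key v := #|[set x | connect a x v]|.

Lemma key_lt u v : a u v -> key u < key v.
Proof.
move=> auv; rewrite /key; apply: proper_card; apply/properP; split.
  apply/subsetP=> x; rewrite !inE => cxu; apply: connect_trans cxu (connect1 auv).
by exists v; rewrite !inE ?connect0 //; apply: a_acy.
Qed.

Definition tord := sort (fun x y => key x <= key y) (enum T).

Lemma tord_sorted : sorted (fun x y => key x <= key y) tord.
Proof. by apply: sort_sorted => x y; apply: leq_total. Qed.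

Lemma tord_index u v : key u < key v -> index u tord < index v tord.
Proof.
move=> lt; rewrite ltnNge; apply/negP=> le.
have mu : u \in tord by rewrite mem_sort mem_enum.
have mv : v \in tord by rewrite mem_sort mem_enum.
have := sorted_leq_nth (fun y x z => @leq_trans (key y) (key x) (key z)) (fun x => leqnn (key x)) u tord_sorted.
move=> /(_ (index v tord) (index u tord)); rewrite !inE !index_mem !nth_index // => /(_ mv mu le).
by rewrite leqNgt lt.
Qed.

Lemma a_antisym u v : a u v -> ~~ a v u.
Proof. by move=> auv; apply/negP=> avu; move: (a_acy auv); rewrite connect1. Qed.

Lemma topo_ok : PC_acyclic_type5 adj col.
Proof.
exists tord; split.
- by rewrite sort_uniq enum_uniq.
- by move=> v; rewrite mem_sort mem_enum.
have fw v u : adj v u -> (index v tord < index u tord) = a v u.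
  move=> h; case/orP: (a_tot h) => [avu|auv].
    by rewrite avu; apply: tord_index; apply: key_lt.
  rewrite (negbTE (a_antisym auv)); apply/negbTE; rewrite -leqNgt; apply: ltnW.
  by apply: tord_index; apply: key_lt.
have bw v u : adj v u -> (index u tord < index v tord) = a u v.
  by move=> h; rewrite fw // adj_sym.
move=> v u w hu hw; split.
- rewrite !fw // => avu avw; case: (eqVneq (col v u) (col v w)) => // /eqP ne; case: a_nc.
  by exists v, u, w; apply: Or32.
- rewrite !bw // => auv awv; rewrite col_sym // [col v w]col_sym //.
  case: (eqVneq (col u v) (col w v)) => // /eqP ne; case: a_nc.
  by exists v, u, w; apply: Or31.
- rewrite bw // fw // => auv avw; rewrite col_sym // => e; case: a_nc.
  by exists v, u, w; apply: Or33.
Qed.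
End Topo.


Lemma mono_parity (f : T -> T -> bool) x q :
  uniq (x :: q) ->
  (forall v, v \in x :: q -> (col (prev (x :: q) v) v == col v (next (x :: q) v)) =
                            (f v (prev (x :: q) v) == f v (next (x :: q) v))) ->
  odd (mono_count col (x :: q)) =
  odd (size (x :: q)) (+) odd (epath (fun a b => f b a : nat) x (rcons q x))
                      (+) odd (epath (fun a b => f a b : nat) x (rcons q x)).
Proof.
move=> U H; set c := x :: q.
rewrite -(sum_prev (fun a b => f b a : nat) U) -(sum_next (fun a b => f a b : nat) U).
have -> : mono_count col c = count (fun v => f v (prev c v) == f v (next c v)) c.
  by apply: eq_in_count => v vin; apply: H.
rewrite count_sum.
have E : odd (\sum_(v <- c) ((f v (prev c v) == f v (next c v) : nat) + f v (prev c v) + f v (next c v)))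
   = odd (size c).
  by apply: sum_odd => v; case: (f v _); case: (f v _).
rewrite !big_split !oddD in E; rewrite -E.
by case: (odd (size c)); case: odd; case: odd; case: odd.
Qed.

Section Ord.
Variable s : seq T.
Hypothesis hs : type5_ordering adj col s.

Definition pos u v := index u s < index v s.

Lemma in_s v : v \in s.
Proof. by case: hs. Qed.

Lemma pos_neg u v : u != v -> pos v u = ~~ pos u v.
Proof.
move=> ne; rewrite /pos -leqNgt ltn_neqAle; case: eqP => //= e.
case/eqP: ne; by rewrite -(nth_index u (in_s u)) -e nth_index ?in_s.
Qed.

Lemma L5 v u w : adj v u -> adj v w -> (col v u == col v w) = (pos v u == pos v w).
Proof.
move=> hu hw; case: hs => _ _ H.
case: (H v u w hu hw) => H1 H2 H3; case: (H v w u hw hu) => _ _ H4.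
have nu : pos u v = ~~ pos v u by rewrite pos_neg // adj_neq.
have nw : pos w v = ~~ pos v w by rewrite pos_neg // adj_neq.
move: H1 H2 H3 H4; rewrite /pos in nu nw *; rewrite nu nw.
case: (index v s < index u s); case: (index v s < index w s) => /= H1 H2 H3 H4.
- by rewrite H1 // !eqxx.
- by apply/eqP => e; apply: (H4 erefl erefl); rewrite e.
- by apply/eqP => e; apply: (H3 erefl erefl); rewrite e.
- by rewrite H2 // !eqxx.
Qed.

Lemma ord_two : at_most_two_colors adj col.
Proof.
move=> x u v w hu hv hw; have := L5 hu hv; have := L5 hu hw; have := L5 hv hw.
case: (pos x u); case: (pos x v); case: (pos x w) => /= /eqP A /eqP B /eqP C;
  by [apply: Or31 | apply: Or32 | apply: Or33].
Qed.
Lemma ord_cycle c : is_graph_cycle adj c ->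
  0 < mono_count col c /\ ~~ odd (mono_count col c).
Proof.
case/and3P; case: c => [|x q] // cy U sz.
have Hm v : v \in x :: q -> (col (prev (x :: q) v) v == col v (next (x :: q) v)) =
    (pos v (prev (x :: q) v) == pos v (next (x :: q) v)).
  move=> vin; rewrite col_sym ?(prev_cycle cy) //; apply: L5.
    by rewrite adj_sym (prev_cycle cy).
  exact: (next_cycle cy).
split.
- rewrite -has_count; apply/hasP.
  have [m min mmax] := @arg_maxnP T x (fun i => i \in x :: q) (fun i => index i s) (mem_head x q).
  exists m => //; rewrite Hm // /pos.
  have h1 : index (prev (x :: q) m) s <= index m s by apply: mmax; rewrite mem_prev.
  have h2 : index (next (x :: q) m) s <= index m s by apply: mmax; rewrite mem_next.
  by rewrite !ltnNge h1 h2.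
- rewrite (@mono_parity pos) //.
  have E : epath (fun a b => (pos b a : nat) + pos a b) x (rcons q x) = size (rcons q x).
    rewrite -(epath1 x (rcons q x)); apply: (epath_eq_path (e := adj)) => // a b hab.
    by rewrite (pos_neg (adj_neq hab)); case: (pos a b).
  rewrite epathD size_rcons in E.
  move: (congr1 odd E); rewrite oddD -addbA => ->.
  by case: odd.
Qed.

Definition Inv (st : pstate T) : Prop := exists g : T -> bool,
  (forall u v, adj u v -> g u = g v) /\
  forall u v, Defs.arc st u v = [&& adj u v, (u \in marked st) || (v \in marked st) & pos u v == g u].

Lemma orient_ok (M : {set T}) (a : rel T) (g g' : T -> bool) y i out :
  (forall u v, a u v = [&& adj u v, (u \in M) || (v \in M) & pos u v == g u]) ->
  (forall u v, adj u v -> g' u = g' v) ->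
  (forall v, adj y v -> ((col y v == i) == out) = (pos y v == g' y)) ->
  (forall u v, adj u v -> (u \in M) || (v \in M) -> g u = g' u) ->
  forall u v, orient_at adj col a y i out u v =
     [&& adj u v, (u \in y |: M) || (v \in y |: M) & pos u v == g' u].
Proof.
move=> Ha Hg' Hy H3 u v; rewrite /orient_at.
case: (eqVneq u y) => [->|uy].
  rewrite setU11 /=; case h: (adj y v) => //=; exact: Hy.
case: (eqVneq v y) => [->|vy].
  rewrite setU11 orbT; have -> : adj y u = adj u y by rewrite adj_sym.
  case h0: (adj u y) => //=; have h : adj y u by rewrite adj_sym.
  rewrite -(Hg' _ _ h) (pos_neg (adj_neq h)); move: (Hy u h); clear Hy.
  by case: (col y u == i); case: out; case: (pos y u); case: (g' y).
rewrite !in_setU1 (negbTE uy) (negbTE vy) /= Ha.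
case h: (adj u v) => //=; case m: (_ || _) => //=; by rewrite (H3 u v).
Qed.

Lemma Inv_init : Inv (init_state T).
Proof. by exists (fun _ => true); split => // u v; rewrite /= !inE /= andbF. Qed.

Lemma Inv_step st st' : Inv st -> pstep adj col st st' -> Inv st'.
Proof.
move=> I stp; case: stp I.
- move=> st0 x i out xnm hconn hi [g [Hg Ha]].
  have cx : forall u v, adj u v -> connect adj x u = connect adj x v.
    move=> u v h; apply/idP/idP => c.
      exact: connect_trans c (connect1 h).
    by apply: connect_trans c (connect1 _); rewrite adj_sym.
  have H3 b : forall u v, adj u v -> (u \in marked st0) || (v \in marked st0) ->
      g u = (fun w => if connect adj x w then b else g w) u.
    move=> u v h /orP[um|vm] /=; case cxu: (connect adj x u) => //.
      by move: (hconn u um); rewrite cxu.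
    by move: (hconn v vm); rewrite -(cx _ _ h) cxu.
  have Hg' b : forall u v, adj u v -> (fun w => if connect adj x w then b else g w) u =
                                      (fun w => if connect adj x w then b else g w) v.
    by move=> u v h /=; rewrite (cx _ _ h); case: (connect adj x v) => //; apply: Hg.
  case: hi => [[z [hz ci]]|iso].
  + exists (fun w => if connect adj x w then (pos x z == out) else g w); split; first exact: Hg'.
    move=> u0 v0 /=; apply: (orient_ok Ha (Hg' _) _ (H3 _)).
    move=> v h /=; rewrite connect0 -ci (L5 h hz).
    by case: (pos x v); case: (pos x z); case: out.
  + exists (fun w => if connect adj x w then true else g w); split; first exact: Hg'.
    move=> u0 v0 /=; apply: (orient_ok Ha (Hg' _) _ (H3 _)).
    by move=> v h; move: (iso v); rewrite h.
- move=> st0 y w ynm awy [g [Hg Ha]]; exists g; split => //.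
  have := Ha w y; rewrite awy (negbTE ynm) orbF => /esym/and3P[hwy wm pg].
  move=> u0 v0 /=; apply: (orient_ok Ha Hg _ (fun _ _ _ _ => erefl)).
  have hyw : adj y w by rewrite adj_sym.
  move=> v h; rewrite (col_sym hwy) (L5 h hyw) (pos_neg (adj_neq hwy)).
  rewrite -(Hg _ _ hwy) (eqP pg).
  by case: (pos y v); case: (g w).
- move=> st0 y w ynm ayw [g [Hg Ha]]; exists g; split => //.
  have := Ha y w; rewrite ayw (negbTE ynm) /= => /esym/andP[hyw /andP[wm pg]].
  move=> u0 v0 /=; apply: (orient_ok Ha Hg _ (fun _ _ _ _ => erefl)).
  move=> v h; rewrite (L5 h) // (eqP pg).
  by case: (pos y v); case: (g y).
Qed.

Lemma Inv_nc st : Inv st -> ~ conflict col (Defs.arc st).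
Proof.
case=> g [Hg Ha] [z [u [w H]]].
have P a b : Defs.arc st a b -> adj a b /\ pos a b = g a.
  by rewrite Ha => /and3P[h _ /eqP]; split.
case: H => [[/P[hu pu] [/P[hw pw] ne]]|[/P[hu pu] [/P[hw pw] ne]]|[/P[hu pu] [/P[hw pw] e]]].
- apply: ne; rewrite (col_sym hu) (col_sym hw); apply/eqP.
  have hu' : adj z u by rewrite adj_sym.
  have hw' : adj z w by rewrite adj_sym.
  rewrite (L5 hu' hw') (pos_neg (adj_neq hu)) (pos_neg (adj_neq hw)) pu pw.
  by rewrite (Hg _ _ hu) (Hg _ _ hw).
- apply: ne; apply/eqP; by rewrite L5 // pu pw.
- have hu' : adj z u by rewrite adj_sym.
  move: e; rewrite (col_sym hu) => /eqP; rewrite (L5 hu' hw).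
  rewrite (pos_neg (adj_neq hu)) pu pw (Hg _ _ hu).
  by case: (g z).
Qed.

Lemma Inv_reach st : reachable adj col st -> Inv st.
Proof.
elim=> [|s1 s2 _ IH _ stp]; first exact: Inv_init.
exact: Inv_step IH stp.
Qed.

Lemma path_cross (M : {set T}) y p : path adj y p -> y \notin M -> last y p \in M ->
  exists u v, [/\ adj u v, u \notin M & v \in M].
Proof.
elim: p y => [|z p IH] y /=; first by move=> _ /negbTE ->.
case/andP=> hyz pp ynm lm; case: (boolP (z \in M)) => zm.
  by exists y, z.
exact: IH pp zm lm.
Qed.

Lemma Inv_terminal st : Inv st -> terminal adj col st -> forall v, v \in marked st.
Proof.
move=> I term y; apply/negPn/negP => ynm.
case: I => g [Hg Ha].
case: (boolP [exists m, (m \in marked st) && connect adj y m]).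
  case/existsP=> m /andP[mm /connectP[p pp lp]].
  have lm : last y p \in marked st by rewrite -lp.
  have [u [v [huv unm vm]]] := path_cross pp ynm lm.
  have hvu : adj v u by rewrite adj_sym.
  have auv := Ha u v; have avu := Ha v u.
  rewrite huv vm orbT /= (Hg _ _ huv) in auv.
  rewrite hvu vm /= (pos_neg (adj_neq huv)) in avu.
  case e: (pos u v == g v).
    by apply: (term _ (pstep_out adj col unm (_ : Defs.arc st u v))); rewrite auv e.
  by apply: (term _ (pstep_in adj col unm (_ : Defs.arc st v u))); rewrite avu; move: e; case: (pos u v); case: (g v).
rewrite negb_exists => /forallP nc.
case: (pickP (adj y)) => [z hz|iso].
  apply: (term _ (@pstep_start _ _ adj col st y (col y z) true ynm _ _)).
    by move=> m mm; move: (nc m); rewrite mm.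
  by left; exists z.
apply: (term _ (@pstep_start _ _ adj col st y (col y y) true ynm _ _)).
  by move=> m mm; move: (nc m); rewrite mm.
by right => z; rewrite iso.
Qed.

Lemma conn_dir (a : rel T) (g : T -> bool) :
  (forall u v, adj u v -> g u = g v) ->
  (forall u v, a u v = adj u v && (pos u v == g u)) ->
  forall v w, connect a v w -> g v = g w /\ (if g v then index v s <= index w s else index w s <= index v s).
Proof.
move=> Hg Ha v w /connectP[p pp ->] {w}.
elim: p v pp => [|z p IH] v /=; first by split=> //; case: (g v).
case/andP; rewrite Ha => /andP[h /eqP pz] pp.
case: (IH z pp) => e1 e2; rewrite -e1 (Hg _ _ h); split => //.
move: e2 pz; rewrite /pos (Hg _ _ h); case: (g z) => e2 pz.
  exact: leq_trans (ltnW pz) e2.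
by apply: leq_trans e2 _; rewrite leqNgt pz.
Qed.

Lemma ord_proc : procedure_succeeds_acyclic adj col.
Proof.
split; first exact: ord_two.
  by move=> st /Inv_reach /Inv_nc.
move=> st /Inv_reach I term; have allm := Inv_terminal I term.
case: I => g [Hg Ha].
have Ha' u v : Defs.arc st u v = adj u v && (pos u v == g u) by rewrite Ha !allm.
split.
  move=> u v h; rewrite !Ha' h adj_sym h /= (pos_neg (adj_neq h)) (Hg _ _ h).
  by case: (pos u v); case: (g v).
move=> u v; rewrite Ha' => /andP[h /eqP p]; apply/negP => /(conn_dir Hg Ha') [e1 e2].
move: e2; rewrite e1 -p; have := pos_neg (adj_neq h); rewrite /pos.
case E: (index u s < index v s) => /= e.
  by rewrite leqNgt E.
by rewrite leqNgt e.
Qed.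
End Ord.

Lemma pstep_card st st' : pstep adj col st st' -> #|marked st'| = (#|marked st|).+1.
Proof.
by case=> [st0 x i out xnm _ _|st0 y w ynm _|st0 y w ynm _] /=; rewrite cardsU1 ?xnm ?ynm.
Qed.

Lemma exists_terminal : (forall st, reachable adj col st -> ~ conflict col (Defs.arc st)) ->
  exists st, reachable adj col st /\ terminal adj col st.
Proof.
move=> NC.
suff H : forall n st, reachable adj col st -> #|T| - #|marked st| <= n ->
   exists st', reachable adj col st' /\ terminal adj col st'.
  exact: (H _ _ (reach_init adj col) (leqnn _)).
elim=> [|n IH] st rs hn.
  exists st; split => // st' stp; have h2 := pstep_card stp.
  have h1 : #|marked st'| <= #|T| by apply: max_card.
  lia.
case: (classic (terminal adj col st)) => [t|nt]; first by exists st.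
have [st' stp] : exists st', pstep adj col st st'.
  by apply: NNPP => ne; apply: nt => st' stp; apply: ne; exists st'.
apply: (IH st'); first exact: (reach_step rs (NC _ rs) stp).
have h2 := pstep_card stp; have h1 : #|marked st'| <= #|T| by apply: max_card.
lia.
Qed.

Lemma arc_adj st : reachable adj col st -> forall u v, Defs.arc st u v -> adj u v.
Proof.
elim=> [|s1 s2 _ IH _ stp] u v //=.
case: stp IH => [st0 x i out _ _ _|st0 y w _ _|st0 y w _ _] IH /=; rewrite /orient_at;
  (case: eqP => [->|_]; [by case/andP|]); (case: eqP => [->|_]; [by case/andP; rewrite adj_sym|]); exact: IH.
Qed.

Lemma proc_ord : procedure_succeeds_acyclic adj col -> PC_acyclic_type5 adj col.
Proof.
case=> two NC TM.
have [st [rs ts]] := exists_terminal NC.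
have [tot acy] := TM st rs ts.
exact: (@topo_ok (Defs.arc st) tot acy (NC st rs)).
Qed.


Section Cyc.
Hypothesis two : at_most_two_colors adj col.
Hypothesis cyc : forall p, is_graph_cycle adj p -> 0 < mono_count col p /\ ~~ odd (mono_count col p).

Definition sig (v u : T) : bool :=
  if [pick z | adj v z] is Some z then col v u == col v z else false.

Lemma sig_col v a b : adj v a -> adj v b -> (col v a == col v b) = (sig v a == sig v b).
Proof.
move=> ha hb; rewrite /sig; case: pickP => [z hz|iso]; last by move: (iso a); rewrite ha.
have := two ha hb hz.
case: (eqVneq (col v a) (col v b)) => [->|ab]; first by rewrite eqxx.
case: (eqVneq (col v a) (col v z)) => [az|az]; case: (eqVneq (col v b) (col v z)) => [bz|bz] //=.
- by case/negP: ab; rewrite az bz.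
- by case=> e; [rewrite e eqxx in ab | rewrite e eqxx in az | rewrite e eqxx in bz].
Qed.

Definition wt (a b : T) : nat := (sig a b == sig b a).

Lemma closed_even x L : path adj x L -> last x L = x -> ~~ odd (epath wt x L).
Proof.
case/lastP: L => [|q y] //; rewrite last_rcons => pq yx; subst x.
move: y q pq; apply: (closed_walk_ind (Pr := fun x q => ~~ odd (epath wt x (rcons q x)))).
- move=> x q U pq.
  case: (ltnP 1 (size q)) => sq; last first.
    case: q U pq sq => [|y [|z q]] U pq sq //.
    + by move: pq; rewrite /= adj_irr.
    + by rewrite /= /wt eq_sym addn0 addnn odd_double.
  have cy : is_graph_cycle adj (x :: q) by apply/and3P; split.
  have [_ ev] := cyc cy.
  have E := @mono_parity sig x q U.
  rewrite E in ev.
  + have Eo : odd (epath (fun a b => wt a b + (sig a b : nat) + sig b a) x (rcons q x))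
             = odd (size (rcons q x)).
      by apply: epath_odd => a b; rewrite /wt; case: (sig a b); case: (sig b a).
    rewrite !epathD !oddD size_rcons in Eo.
    move: ev; rewrite -Eo.
    by case: (odd (epath wt _ _)); case: (odd (epath _ _ _)); case: (odd (epath _ _ _)).
  + have cq : cycle adj (x :: q) by [].
    move=> v vin; rewrite (col_sym (prev_cycle cq vin)); apply: sig_col.
      by rewrite adj_sym (prev_cycle cq vin).
    exact: (next_cycle cq vin).
- move=> x a b; rewrite rcons_cat /= -cat_rcons epath_cat last_rcons oddD.
  by case: odd; case: odd.
- move=> x a y b d.
  rewrite !rcons_cat /= rcons_cat /= -!cat_rcons !epath_cat !last_rcons !oddD.
  by case: odd; case: odd; case: odd.
Qed.

Lemma ex_path v : exists p, path adj (root adj v) p && (last (root adj v) p == v).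
Proof.
have c : connect adj (root adj v) v by rewrite (sym_connect_sym adj_sym) connect_root.
by case/connectP: c => p pp lp; exists p; rewrite pp -lp eqxx.
Qed.

Definition Pth v := xchoose (ex_path v).
Definition tv v := odd (epath wt (root adj v) (Pth v)).

Lemma wt_sym a b : wt a b = wt b a.
Proof. by rewrite /wt eq_sym. Qed.

Lemma tv_edge u v : adj u v -> tv v = tv u (+) odd (wt u v).
Proof.
move=> h.
have ru : root adj u = root adj v.
  by apply/(rootP (sym_connect_sym adj_sym)); apply: connect1.
rewrite /tv ru; set r := root adj v.
have /andP[pu /eqP lu] := xchooseP (ex_path u); rewrite -/(Pth u) ru -/r in pu lu.
have /andP[pv /eqP lv] := xchooseP (ex_path v); rewrite -/(Pth v) -/r in pv lv.
set L := Pth u ++ v :: rev (belast r (Pth v)).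
have pL : path adj r L.
  rewrite /L cat_path pu lu /= h /=.
  have := rev_path adj r (Pth v); rewrite lv => ->.
  by rewrite (eq_path (e' := adj)) // => a b; rewrite adj_sym.
have lL : last r L = r.
  by rewrite /L last_cat lu /= -{1}lv last_rev_belast.
have := closed_even pL lL.
rewrite /L epath_cat lu /= -[X in epath wt X (rev _)]lv epath_rev (@eq_epath _ (fun a b => wt b a) wt _ _ (fun a b => wt_sym b a)) !oddD.
by case: (odd (epath wt r (Pth u))); case: (odd (epath wt r (Pth v))); case: (odd (wt u v)).
Qed.

Definition fo v u := sig v u (+) tv v.

Lemma fo_anti u v : adj u v -> fo v u = ~~ fo u v.
Proof.
move=> h; rewrite /fo (tv_edge h) /wt oddb.
by case: (sig u v); case: (sig v u); case: (tv u).
Qed.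

Lemma fo_loc v u u' : adj v u -> adj v u' -> (fo v u == fo v u') = (col v u == col v u').
Proof.
move=> h h'; rewrite (sig_col h h') /fo.
by case: (sig v u); case: (sig v u'); case: (tv v).
Qed.

Definition ao u v := adj u v && fo u v.

Lemma ao_acy : acyclic_digraph ao.
Proof.
move=> u v auv; apply/negP => /connectP [p pp lp].
have E : v :: p = rcons (belast v p) u by rewrite lp -lastI.
have : path ao u (rcons (belast v p) u) by rewrite -E /= auv.
move: u (belast v p) {E auv pp lp}; apply: (closed_walk_ind (Pr := fun _ _ => False)) => //.
move=> x q U pq.
have sub : subrel ao adj by move=> a b /andP[].
case: (ltnP 1 (size q)) => sq; last first.
  case: q U pq sq => [|y [|z q]] U pq sq //.
  + by move: pq; rewrite /= /ao adj_irr.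
  + move: pq; rewrite /= /ao andbT => /andP[/andP[h f1] /andP[_ f2]].
    by move: f2; rewrite (fo_anti h) f1.
have cq : cycle ao (x :: q) by [].
have cy : is_graph_cycle adj (x :: q).
  by apply/and3P; split => //; apply: (sub_path sub).
have [pos0 _] := cyc cy; move: pos0.
have -> : mono_count col (x :: q) = count pred0 (x :: q).
  apply: eq_in_count => w win /=.
  have /andP[hp fp] := prev_cycle cq win.
  have /andP[hn fn] := next_cycle cq win.
  have hp' : adj w (prev (x :: q) w) by rewrite adj_sym.
  rewrite (col_sym hp) -(fo_loc hp' hn) (fo_anti hp) fp fn.
  by [].
by rewrite count_pred0.
Qed.

Lemma cyc_ord : PC_acyclic_type5 adj col.
Proof.
apply: (@topo_ok ao).
- move=> u v h; rewrite /ao h adj_sym h /= (fo_anti h); by case: fo.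
- exact: ao_acy.
- case=> z [u [w H]].
  have P a b : ao a b -> adj a b /\ fo a b by case/andP.
  case: H => [[/P[hu pu] [/P[hw pw] ne]]|[/P[hu pu] [/P[hw pw] ne]]|[/P[hu pu] [/P[hw pw] e]]].
  + have hu' : adj z u by rewrite adj_sym.
    have hw' : adj z w by rewrite adj_sym.
    apply: ne; rewrite (col_sym hu) (col_sym hw); apply/eqP.
    by rewrite -fo_loc // (fo_anti hu) (fo_anti hw) pu pw.
  + by apply: ne; apply/eqP; rewrite -fo_loc // pu pw.
  + have hu' : adj z u by rewrite adj_sym.
    move: e; rewrite (col_sym hu) => /eqP; rewrite -fo_loc // (fo_anti hu) pu pw.
    by [].
Qed.

End Cyc.

End Main.

Theorem theorem5 (T : finType) (K : eqType) (adj : rel T) (col : T -> T -> K)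
  (adj_sym : symmetric adj) (adj_irr : irreflexive adj)
  (col_sym : forall u v, adj u v -> col u v = col v u) :
  [/\ (PC_acyclic_type5 adj col <-> procedure_succeeds_acyclic adj col),
      (procedure_succeeds_acyclic adj col <-> cycle_condition adj col) &
      (cycle_condition adj col <-> PC_acyclic_type5 adj col)].
Proof.
have O2 : PC_acyclic_type5 adj col -> procedure_succeeds_acyclic adj col.
  by case=> s hs; apply: (ord_proc adj_sym adj_irr col_sym hs).
have T1 : procedure_succeeds_acyclic adj col -> PC_acyclic_type5 adj col.
  exact: (proc_ord adj_sym col_sym).
have O3 : PC_acyclic_type5 adj col -> cycle_condition adj col.
  case=> s hs; split; first exact: (ord_two adj_irr hs).
  by move=> p; apply: (ord_cycle adj_sym adj_irr col_sym hs).
have C1 : cycle_condition adj col -> PC_acyclic_type5 adj col.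
  by case=> tw cy; apply: (cyc_ord adj_sym adj_irr col_sym tw cy).
split; split; auto.
Qed.
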